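(* Let $\vec H$ be a DAG. Then there exist graphs $H_1,H_2\in\mathcal G_{\vec H}$ such that $\mathrm{td}(H_1)\le \mathrm{dtd}(\vec H)\le \mathrm{td}(H_2)$.
   Context: For a DAG $\vec H$, a source is a vertex of in-degree $0$; $S$ denotes the set of sources and $N$ the set of non-sources; $R(s)$ is the set of vertices reachable from $s$. $\mathrm{Bip}(\vec H)$ is the bipartite graph with parts $S$ and $N$ in which $s\in S$ and $v\in N$ are adjacent iff $v\in R(s)$. $\mathcal G_{\vec H}$ is the set of all graphs obtained from $\mathrm{Bip}(\vec H)$ by contracting, for each non-source $v$, one edge incident to $v$ (so that all non-sources are eliminated and the resulting graph has vertex set $S$). Equivalently, for a choice of map $f:N\to S$ with $v\in R(f(v))$, the graph has vertex set $S$ and distinct $s,s'$ adjacent iff there is $v\in N$ with $v\in R(s)\cap R(s')$ and $f(v)\in\{s,s'\}$. A DAG elimination forest of $\vec H$ is defined recursively: if $\vec H$ is empty, it is empty; if the underlying undirected graph is disconnected, it is the union of DAG elimination forests of its components; if connected with exactly one source $s$, it is the single-node tree $s$; otherwise it is a tree whose root is an arbitrarily chosen source $s$ and whose subtrees are the trees of a DAG elimination forest of the DAG obtained by deleting $s$ and all vertices reachable from $s$. The depth of a rooted forest is the maximum number of nodes on a root-to-leaf path; $\mathrm{dtd}(\vec H)$ is the minimum depth of a DAG elimination forest. $\mathrm{td}$ denotes the usual treedepth of an undirected graph. *)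

(* Defs.v *)
From mathcomp Require Import all_boot.
Set Implicit Arguments. Unset Strict Implicit. Unset Printing Implicit Defensive.

Section Defs.
Variable T : finType.

Definition acyclic (e : rel T) : Prop :=
  forall x y, e x y -> ~~ connect e y x.

Definition restr (r : rel T) (V : {set T}) : rel T :=
  [rel x y | [&& x \in V, y \in V & r x y]].

Definition ucon (r : rel T) (V : {set T}) : rel T :=
  [rel x y | [&& x \in V, y \in V & r x y || r y x]].

Definition uconnected (r : rel T) (V : {set T}) : bool :=
  (V != set0) && [forall x in V, forall y in V, connect (ucon r V) x y].

Definition comp (r : rel T) (V : {set T}) (x : T) : {set T} :=
  [set y in V | connect (ucon r V) x y].

Definition sources (e : rel T) : {set T} := [set s | [forall x, ~~ e x s]].
Definition nonsources (e : rel T) : {set T} := ~: sources e.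

Definition reach (e : rel T) (s : T) : {set T} := [set v | connect e s v].

Definition is_source_in (e : rel T) (V : {set T}) (s : T) : bool :=
  (s \in V) && [forall x in V, ~~ e x s].
Definition reach_in (e : rel T) (V : {set T}) (s : T) : {set T} :=
  [set v in V | connect (restr e V) s v].

(* dtd_le e V k : the sub-DAG induced on V has a DAG elimination forest of
   depth at most k.  The three constructors follow the recursive definition:
   empty DAG -> empty forest (depth 0);
   disconnected -> union of forests of the components (depth = max);
   connected -> tree rooted at a source s whose subtrees form a forest of the
   DAG obtained by deleting s and all vertices reachable from s
   (depth = 1 + depth of that forest; the one-source case is the instance
   where the remaining DAG is empty). *)
Inductive dtd_le (e : rel T) : {set T} -> nat -> Prop :=
| dtd_empty k : dtd_le e set0 k
| dtd_disc V k : V != set0 -> ~~ uconnected e V ->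
    (forall x, x \in V -> dtd_le e (comp e V x) k) -> dtd_le e V k
| dtd_conn V s k : uconnected e V -> is_source_in e V s ->
    dtd_le e (V :\: reach_in e V s) k -> dtd_le e V k.+1.

Definition is_dtd (e : rel T) (d : nat) : Prop :=
  dtd_le e [set: T] d /\ forall k, dtd_le e [set: T] k -> d <= k.

(* td_le g V k : the undirected graph with adjacency g (symmetrised),
   induced on V, has treedepth at most k, via the standard recursive
   definition: td(empty) = 0; td = max over components if disconnected;
   td = 1 + min_v td(G - v) if connected. *)
Inductive td_le (g : rel T) : {set T} -> nat -> Prop :=
| td_empty k : td_le g set0 k
| td_disc V k : V != set0 -> ~~ uconnected g V ->
    (forall x, x \in V -> td_le g (comp g V x) k) -> td_le g V k
| td_conn V v k : uconnected g V -> v \in V ->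
    td_le g (V :\ v) k -> td_le g V k.+1.

Definition is_td (g : rel T) (V : {set T}) (t : nat) : Prop :=
  td_le g V t /\ forall k, td_le g V k -> t <= k.

Definition valid_contraction (e : rel T) (f : T -> T) : Prop :=
  forall v, v \in nonsources e -> (f v \in sources e) /\ (v \in reach e (f v)).

Definition contr_adj (e : rel T) (f : T -> T) : rel T :=
  [rel s s' | (s != s') &&
     [exists v, [&& v \in nonsources e, v \in reach e s, v \in reach e s'
                 & (f v == s) || (f v == s')]]].

Definition in_GH (e : rel T) (g : rel T) : Prop :=
  exists f, valid_contraction e f /\ g =2 contr_adj e f.

End Defs.

(* Main.v *)
Require Import Defs.
From mathcomp Require Import all_boot zify.
From Stdlib Require Import Classical IndefiniteDescription.
Import Defs.
Set Implicit Arguments. Unset Strict Implicit. Unset Printing Implicit Defensive.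

Section Gen.
Variable T : finType.
Implicit Types (g : rel T) (W : {set T}).

Lemma ucon_sym g W : symmetric (ucon g W).
Proof. move=> x y; rewrite /ucon /=; by case: (x \in W); case: (y \in W) => //=; rewrite orbC. Qed.

Lemma ucon_connect_sym g W : connect_sym (ucon g W).
Proof. exact: sym_connect_sym (ucon_sym g W). Qed.

Lemma closure_P (r : rel T) (P : T -> Prop) x y :
  (forall a b, r a b -> P a -> P b) -> connect r x y -> P x -> P y.
Proof.
move=> HP /connectP[p Hp ->]; elim: p x Hp => //= a p IH x /andP[Hxa Hp] Px.
exact: (IH a Hp (HP _ _ Hxa Px)).
Qed.

Lemma comp_sub g W x : comp g W x \subset W.
Proof. by apply/subsetP=> y; rewrite inE => /andP[]. Qed.

Lemma comp_self g W x : x \in W -> x \in comp g W x.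
Proof. by move=> Hx; rewrite inE Hx connect0. Qed.

Lemma comp_edge g W x a b : a \in comp g W x -> ucon g W a b -> b \in comp g W x.
Proof.
rewrite !inE => /andP[Ha Hxa] Hab; move: (Hab) => /= /and3P[_ -> _] /=.
exact: connect_trans Hxa (connect1 Hab).
Qed.

Lemma comp_conn_from g W x y : y \in comp g W x -> connect (ucon g W) x y.
Proof. by rewrite inE => /andP[]. Qed.

Lemma comp_trans g W x y : y \in comp g W x -> comp g W y = comp g W x.
Proof.
move=> Hy; have Hxy := comp_conn_from Hy.
apply/setP=> z; rewrite !inE; case: (z \in W) => //=; apply/idP/idP => H.
- exact: connect_trans Hxy H.
- by apply: connect_trans H; rewrite ucon_connect_sym.
Qed.

Lemma path_comp g W x0 p x : x \in comp g W x0 -> path (ucon g W) x p ->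
  connect (ucon g (comp g W x0)) x (last x p).
Proof.
elim: p x => [|a p IH] x Hx /=; first by rewrite connect0.
case/andP=> Hxa Hp; have Ha := comp_edge Hx Hxa.
apply: connect_trans (connect1 _) (IH a Ha Hp).
by rewrite /ucon /= Hx Ha /=; move: Hxa => /= /and3P[_ _ ->].
Qed.

Lemma comp_conn g W x : x \in W -> uconnected g (comp g W x).
Proof.
move=> Hx; apply/andP; split.
  by apply/set0Pn; exists x; apply: comp_self.
have H y : y \in comp g W x -> connect (ucon g (comp g W x)) x y.
  move=> Hy; move: (comp_conn_from Hy) => /connectP[p Hp ->].
  exact: path_comp (comp_self _ Hx) Hp.
apply/forall_inP=> y Hy; apply/forall_inP=> z Hz.
apply: connect_trans (H z Hz); rewrite ucon_connect_sym; exact: H.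
Qed.

Lemma uconnected_comp g W x : uconnected g W -> x \in W -> comp g W x = W.
Proof.
case/andP=> _ /forall_inP H Hx; apply/setP=> z; rewrite inE.
case Hz: (z \in W) => //=; exact: (forall_inP (H x Hx) z Hz).
Qed.

Lemma conn_in_comp g g' W W' x : W' \subset W ->
  (forall a b, a \in W' -> b \in W' -> g' a b -> g a b) ->
  uconnected g' W' -> x \in W' -> W' \subset comp g W x.
Proof.
move=> /subsetP sW Hg /andP[_ /forall_inP Hc] Hx; apply/subsetP=> y Hy.
rewrite inE sW //=; have := forall_inP (Hc x Hx) y Hy.
apply: connect_sub => a b /= /and3P[Ha Hb Hab]; apply: connect1; rewrite /ucon /= !sW //=.
case/orP: Hab => H; [by rewrite (Hg a b Ha Hb H) | by rewrite (Hg b a Hb Ha H) orbT].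
Qed.

Lemma td_mono_k g W k k' : td_le g W k -> k <= k' -> td_le g W k'.
Proof.
move=> h; elim: h k' => {W k}.
- by move=> k W' _; apply: td_empty.
- move=> V k HV Hc _ IH k' Hk; apply: td_disc => // x Hx; exact: IH.
- move=> V v k Hc Hv _ IH [|k'] // Hk; apply: td_conn Hc Hv (IH _ Hk).
Qed.

Lemma td_comps g W k : (forall x, x \in W -> td_le g (comp g W x) k) -> td_le g W k.
Proof.
move=> H; case: (set_0Vmem W) => [->|[x Hx]]; first exact: td_empty.
case Hc: (uconnected g W).
  by rewrite -(uconnected_comp Hc Hx); apply: H.
apply: td_disc => //; last by rewrite Hc.
by apply/set0Pn; exists x.
Qed.

Lemma td_comp g W k x : td_le g W k -> x \in W -> td_le g (comp g W x) k.
Proof.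
case=> {W k}.
- by move=> k; rewrite inE.
- by move=> V k _ _ H Hx; apply: H.
- move=> V v k Hc Hv h Hx; rewrite (uconnected_comp Hc Hx); exact: td_conn Hc Hv h.
Qed.

Lemma td_inv_conn g W k : uconnected g W -> td_le g W k ->
  exists k' v, [/\ k = k'.+1, v \in W & td_le g (W :\ v) k'].
Proof.
move=> Hc h; case: h Hc => {W k}.
- by move=> k /andP[]; rewrite eqxx.
- by move=> V k _ /negbTE ->.
- by move=> V v k _ Hv h _; exists k, v.
Qed.

Lemma td_sub g g' k : forall W W', td_le g W k -> W' \subset W ->
  (forall a b, a \in W' -> b \in W' -> g' a b -> g a b) -> td_le g' W' k.
Proof.
elim: k => [|k IH] W W' h sW Hg; apply: td_comps => x Hx.
- have sC'W' : comp g' W' x \subset W' := comp_sub _ _ _.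
  have HgC : forall a b, a \in comp g' W' x -> b \in comp g' W' x -> g' a b -> g a b.
    by move=> a b Ha Hb; apply: Hg; apply: (subsetP sC'W').
  have hC := td_comp h (subsetP sW _ Hx).
  by have [k' [v [//]]] := td_inv_conn (comp_conn _ (subsetP sW _ Hx)) hC.
- have sC'W' : comp g' W' x \subset W' := comp_sub _ _ _.
  have HgC : forall a b, a \in comp g' W' x -> b \in comp g' W' x -> g' a b -> g a b.
    by move=> a b Ha Hb; apply: Hg; apply: (subsetP sC'W').
  have sC : comp g' W' x \subset comp g W x.
    apply: conn_in_comp HgC (comp_conn _ Hx) (comp_self _ Hx).
    exact: subset_trans sC'W' sW.
  have hC := td_comp h (subsetP sW _ Hx).
  have [k' [v [[<-] Hv hv]]] := td_inv_conn (comp_conn _ (subsetP sW _ Hx)) hC.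
  case Hvc: (v \in comp g' W' x).
    apply: td_conn (comp_conn _ Hx) Hvc _.
    apply: IH hv _ _; first by apply: setSD.
    by move=> a b; rewrite !in_setD1 => /andP[_ Ha] /andP[_ Hb]; apply: HgC.
  apply: td_mono_k (leqnSn k); apply: IH hv _ HgC.
  apply/subsetP=> y Hy; rewrite in_setD1 (subsetP sC _ Hy) andbT.
  by apply: contraNneq (negbT Hvc) => <-.
Qed.

Lemma td_exists g n : forall W, #|W| <= n -> td_le g W n.
Proof.
elim: n => [|n IH] W HW.
  have -> : W = set0 by apply: cards0_eq; lia.
  exact: td_empty.
apply: td_comps => x Hx; apply: td_conn (comp_conn _ Hx) (comp_self _ Hx) _.
apply: IH; have := cardsD1 x (comp g W x); rewrite comp_self //.
have := subset_leq_card (comp_sub g W x); lia.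
Qed.

End Gen.

Lemma min_ex (P : nat -> Prop) : (exists n, P n) -> exists m, P m /\ forall k, P k -> m <= k.
Proof.
case=> n; elim: n {-2}n (leqnn n) => [|n IH] m Hm Pm.
  by exists m; split => // k _; have -> : m = 0 by lia.
case: (classic (exists k, k < m /\ P k)) => [[k [Hk Pk]]|H].
  by apply: (IH k) => //; lia.
exists m; split => // k Pk; rewrite leqNgt; apply/negP => Hk; apply: H; by exists k.
Qed.

Section Dag.
Variable T : finType.
Variable e : rel T.
Hypothesis He : acyclic e.
Notation S := (sources e).
Implicit Types (V W : {set T}).

Definition closedV V := forall x y, e x y -> y \in V -> x \in V.

Lemma closedT : closedV [set: T].
Proof. by move=> x y _ _; rewrite in_setT. Qed.

Lemma path_closed V p x : closedV V -> path e x p -> last x p \in V -> x \in V.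
Proof.
move=> HV; elim: p x => //= a p IH x /andP[Hxa Hp] Hl.
exact: HV _ _ Hxa (IH a Hp Hl).
Qed.

Lemma closed_connect V x y : closedV V -> connect e x y -> y \in V -> x \in V.
Proof. by move=> HV /connectP[p Hp ->]; apply: path_closed. Qed.

Lemma closed_restr V x y : closedV V -> connect e x y -> y \in V ->
  connect (restr e V) x y.
Proof.
move=> HV /connectP[p Hp ->]; elim: p x Hp => [|a p IH] x /=; first by rewrite connect0.
case/andP=> Hxa Hp Hl; have Ha := path_closed HV Hp Hl.
apply: connect_trans (connect1 _) (IH a Hp Hl).
by rewrite /restr /= Ha (HV _ _ Hxa Ha).
Qed.

Lemma reach_inE V s : closedV V -> reach_in e V s = V :&: reach e s.
Proof.
move=> HV; apply/setP=> v; rewrite !inE; case Hv: (v \in V) => //=; apply/idP/idP.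
  by apply: connect_sub => a b /= /and3P[_ _ H]; apply: connect1.
by move=> H; apply: closed_restr.
Qed.

Lemma reachE s v : (v \in reach e s) = connect e s v.
Proof. by rewrite inE. Qed.

Lemma src_connect s x : s \in S -> connect e x s -> x = s.
Proof.
move=> Hs /connectP[p Hp Es]; move: Hp Es; case/lastP: p => [|p y] //=.
rewrite rcons_path last_rcons => /andP[_ H] Es; move: Hs; rewrite Es inE.
by move/forallP/(_ (last x p)); rewrite H.
Qed.

Lemma source_in V s : s \in S -> s \in V -> is_source_in e V s.
Proof.
move=> Hs Hv; rewrite /is_source_in Hv /=; apply/forall_inP => x _.
by move: Hs; rewrite inE => /forallP; apply.
Qed.

Lemma source_from_in V s : closedV V -> is_source_in e V s -> s \in S.
Proof.
move=> HV /andP[Hs /forall_inP H]; rewrite inE; apply/forallP=> x; apply/negP => Hxs.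
by have := H x (HV _ _ Hxs Hs); rewrite Hxs.
Qed.

Lemma comp_closed V x : closedV V -> closedV (comp e V x).
Proof.
move=> HV a y Hay Hy; have HyV := subsetP (comp_sub e V x) y Hy.
have HaV := HV _ _ Hay HyV.
by apply: comp_edge Hy _; rewrite /ucon /= HyV HaV Hay orbT.
Qed.

Lemma diff_closed V s : closedV V -> closedV (V :\: reach_in e V s).
Proof.
move=> HV; rewrite (reach_inE _ HV) => a y Hay; rewrite !inE => /andP[Hn Hy].
rewrite (HV _ _ Hay Hy) /= andbT; move: Hn; rewrite Hy /=; apply: contra => Hsa.
exact: connect_trans Hsa (connect1 Hay).
Qed.

Lemma exists_source v : exists2 s, s \in S & connect e s v.
Proof.
pose anc x := [set y | connect e y x].
have [x Hx Hmin] := @arg_minnP _ v (fun y => connect e y v) (fun y => #|anc y|) (connect0 e v).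
exists x => //; rewrite inE; apply/forallP => y; apply/negP => Hyx.
have Hp : anc y \proper anc x.
  apply/properP; split.
    by apply/subsetP => z; rewrite !inE => Hz; apply: connect_trans Hz (connect1 Hyx).
  by exists x; rewrite !inE ?connect0 //; apply: He.
have := proper_card Hp; have := Hmin y (connect_trans (connect1 Hyx) Hx); lia.
Qed.

Lemma closed_ucon V s w : closedV V -> connect e s w -> w \in V ->
  connect (ucon e V) s w.
Proof.
move=> HV Hsw Hw; have := closed_restr HV Hsw Hw.
by apply: connect_sub => a b /= /and3P[Ha Hb H]; apply: connect1; rewrite /ucon /= Ha Hb H.
Qed.

Lemma sources_diff V s : closedV V -> s \in S :&: V ->
  S :&: (V :\: reach_in e V s) = (S :&: V) :\ s.
Proof.
move=> HV Hs; have [HsS HsV] := setIP Hs.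
rewrite (reach_inE _ HV); apply/setP=> y; rewrite in_setD1 !in_setI in_setD in_setI.
case: (eqVneq y s) => [->|Hne] /=.
  by rewrite HsV reachE connect0 /= andbF.
case HyS: (y \in S) => //=; case HyV: (y \in V) => //=; rewrite andbT reachE.
by apply/negP => /(src_connect HyS) Heq; rewrite Heq eqxx in Hne.
Qed.

Definition contrV V (f : T -> T) : rel T := [rel s s' | (s != s') &&
  [exists v, [&& v \in V, v \in nonsources e, v \in reach e s, v \in reach e s'
              & (f v == s) || (f v == s')]]].

Definition validV V (f : T -> T) :=
  forall v, v \in V -> v \in nonsources e -> f v \in S /\ connect e (f v) v.

Lemma nonsE v : (v \in nonsources e) = (v \notin S).
Proof. by rewrite /nonsources in_setC. Qed.

Lemma contrV_intro V f a b w : a != b -> w \in V -> w \notin S ->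
  connect e a w -> connect e b w -> (f w == a) || (f w == b) -> contrV V f a b.
Proof.
move=> Hab Hw Hn Ha Hb Hf; rewrite /contrV /= Hab /=; apply/existsP; exists w.
by rewrite Hw nonsE Hn !reachE Ha Hb Hf.
Qed.

Lemma contrV_elim V f a b : contrV V f a b -> a != b /\
  exists w, [/\ w \in V, w \notin S, connect e a w, connect e b w
               & (f w == a) || (f w == b)].
Proof.
case/andP=> Hab /existsP[w /and5P[H1 H2 H3 H4 H5]]; split => //; exists w.
by rewrite -nonsE -!reachE.
Qed.

Lemma contr_conn V f (g : rel T) : closedV V -> uconnected e V -> validV V f ->
  (forall a b, a \in S :&: V -> b \in S :&: V -> contrV V f a b -> g a b) ->
  uconnected g (S :&: V).
Proof.
move=> HV Hc Hf Hg.
have edge a b : a \in S :&: V -> b \in S :&: V -> contrV V f a b -> ucon g (S :&: V) a b.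
  by move=> Ha Hb H; rewrite /ucon /= Ha Hb (Hg a b Ha Hb H).
have [v Hv] : exists v, v \in V by case/andP: Hc => /set0Pn.
apply/andP; split.
  have [s Hs Hsv] := exists_source v.
  by apply/set0Pn; exists s; rewrite in_setI Hs (closed_connect HV Hsv Hv).
apply/forall_inP => a Ha; apply/forall_inP => b Hb.
pose A := comp g (S :&: V) a.
pose P y := exists2 s, s \in A & connect e s y.
have back x y : x \in V -> y \in V -> e x y -> P y -> P x.
  move=> HxV HyV Hxy [s HsA Hsy].
  have HsW : s \in S :&: V := subsetP (comp_sub _ _ _) s HsA.
  have Hyn : y \notin S.
    by rewrite inE; apply/negP => /forallP/(_ x); rewrite Hxy.
  have Hyn' : y \in nonsources e by rewrite nonsE.
  have [HtS Hty] := Hf y HyV Hyn'.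
  have HtW : f y \in S :&: V by rewrite in_setI HtS (closed_connect HV Hty HyV).
  have HtA : f y \in A.
    case: (eqVneq s (f y)) => [<-|Hst] //.
    apply: comp_edge HsA (edge s (f y) HsW HtW _).
    by apply: (contrV_intro Hst HyV Hyn Hsy Hty); rewrite eqxx orbT.
  case: (boolP (x \in S)) => HxS.
    case: (eqVneq (f y) x) => [<-|Htx]; first by exists (f y); rewrite ?connect0.
    exists x; last exact: connect0.
    have HxW : x \in S :&: V by rewrite in_setI HxS HxV.
    apply: comp_edge HtA (edge _ _ HtW HxW _).
    by apply: (contrV_intro Htx HyV Hyn Hty (connect1 Hxy)); rewrite eqxx.
  have Hxn' : x \in nonsources e by rewrite nonsE.
  have [HuS Hux] := Hf x HxV Hxn'.
  have HuW : f x \in S :&: V by rewrite in_setI HuS (closed_connect HV Hux HxV).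
  have Huy : connect e (f x) y := connect_trans Hux (connect1 Hxy).
  case: (eqVneq (f y) (f x)) => [Heq|Htu]; first by exists (f y); rewrite // Heq.
  exists (f x) => //.
  apply: comp_edge HtA (edge _ _ HtW HuW _).
  by apply: (contrV_intro Htu HyV Hyn Hty Huy); rewrite eqxx.
have HPa : P a by exists a; [apply: comp_self | apply: connect0].
have HaV : a \in V by case/setIP: Ha.
have HbV : b \in V by case/setIP: Hb.
have Hab := forall_inP (forall_inP (proj2 (andP Hc)) a HaV) b HbV.
have [s HsA Hsb] : P b.
  apply: (closure_P _ Hab HPa) => x y /and3P[HxV HyV /orP[Hxy|Hyx]] Px.
    by case: Px => s Hs Hsx; exists s => //; apply: connect_trans Hsx (connect1 Hxy).
  exact: back y x HyV HxV Hyx Px.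
have HbS : b \in S by case/setIP: Hb.
rewrite (src_connect HbS Hsb) in HsA.
exact: comp_conn_from HsA.
Qed.


Lemma contrV_adj V f a b : contrV V f a b -> contr_adj e f a b.
Proof.
case/andP=> Hab /existsP[w /and5P[_ H2 H3 H4 H5]]; rewrite /contr_adj /= Hab /=.
by apply/existsP; exists w; rewrite H2 H3 H4 H5.
Qed.

Lemma lemA f : validV [set: T] f -> forall n V k, #|V| <= n -> closedV V ->
  td_le (contr_adj e f) (S :&: V) k -> dtd_le e V k.
Proof.
move=> Hf; elim=> [|n IH] V k HVn HV h.
  have -> : V = set0 by apply: cards0_eq; lia.
  exact: dtd_empty.
have HfV : validV V f by move=> v _; apply: Hf; rewrite in_setT.
case: (set_0Vmem V) => [->|[x0 Hx0]]; first exact: dtd_empty.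
case Hc: (uconnected e V).
  have Hcg := contr_conn HV Hc HfV (fun a b _ _ H => contrV_adj H).
  have [k' [s [Ek Hs hs]]] := td_inv_conn Hcg h; rewrite Ek.
  have [HsS HsV] := setIP Hs.
  apply: dtd_conn Hc (source_in HsS HsV) _.
  apply: IH; last 2 first.
  - exact: diff_closed.
  - by rewrite sources_diff.
  have sub : V :\: reach_in e V s \subset V :\ s.
    apply/subsetP=> y; rewrite in_setD in_setD1 => /andP[Hn Hy]; rewrite Hy andbT.
    by apply: contraNneq Hn => ->; rewrite (reach_inE _ HV) in_setI HsV reachE connect0.
  have := subset_leq_card sub; have := cardsD1 s V; rewrite HsV; lia.
apply: dtd_disc; [by apply/set0Pn; exists x0 | by rewrite Hc | move=> x Hx].
apply: IH; last 2 first.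
- exact: comp_closed.
- apply: td_sub h _ (fun a b _ _ H => H).
  by apply: setIS; apply: comp_sub.
have Hp : comp e V x \proper V.
  rewrite properEneq comp_sub andbT; apply/eqP => HC.
  by have := comp_conn e Hx; rewrite HC Hc.
have := proper_card Hp; lia.
Qed.

Lemma lemB V k : dtd_le e V k -> closedV V ->
  exists f, validV V f /\ td_le (contrV V f) (S :&: V) k.
Proof.
elim=> {V k}.
- move=> k _; exists id; split; first by move=> v; rewrite inE.
  rewrite setI0; exact: td_empty.
- move=> V k HV0 Hnc _ IH HV.
  have IH' x : x \in V -> exists f, validV (comp e V x) f /\
      td_le (contrV (comp e V x) f) (S :&: comp e V x) k.
    by move=> Hx; apply: IH Hx (comp_closed HV).
  have : forall C : {set T}, exists f : T -> T, forall x, x \in V -> C = comp e V x ->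
      validV C f /\ td_le (contrV C f) (S :&: C) k.
    move=> C; case: (classic (exists2 x, x \in V & C = comp e V x)) => [[x Hx ->]|Hn].
      by have [f Hf] := IH' x Hx; exists f => y _ _.
    by exists id => x Hx HC; exfalso; apply: Hn; exists x.
  case/functional_choice => F HF.
  pose f v := F (comp e V v) v.
  exists f; split.
    move=> v Hv Hn; have [Hval _] := HF _ v Hv erefl.
    exact: Hval v (comp_self _ Hv) Hn.
  apply: td_comps => s Hs; have [HsS HsV] := setIP Hs.
  have [_ hC] := HF _ s HsV erefl.
  have Hw a w : a \in comp e V s -> w \in V -> connect e a w -> w \in comp e V s.
    move=> Ha Hw Haw; rewrite -(comp_trans Ha) inE Hw /=.
    exact: closed_ucon HV Haw Hw.
  have Hw' b w : w \in comp e V s -> b \in V -> connect e b w -> b \in comp e V s.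
    move=> Hwc Hb Hbw; rewrite -(comp_trans Hwc) inE Hb /= ucon_connect_sym.
    exact: closed_ucon HV Hbw (subsetP (comp_sub _ _ _) w Hwc).
  have sub : comp (contrV V f) (S :&: V) s \subset S :&: comp e V s.
    apply/subsetP=> y Hy; have HyW := subsetP (comp_sub _ _ _) y Hy.
    rewrite in_setI (setIP HyW).1 /=.
    have step : forall a b, ucon (contrV V f) (S :&: V) a b ->
        a \in comp e V s -> b \in comp e V s.
      move=> a b /and3P[HaW HbW Hab] Ha.
      have HbV : b \in V by case/setIP: HbW.
      case/orP: Hab => /contrV_elim[_ [w [HwV _ H1 H2 _]]].
        exact: Hw' b w (Hw a w Ha HwV H1) HbV H2.
      exact: Hw' b w (Hw a w Ha HwV H2) HbV H1.
    exact: (closure_P step (comp_conn_from Hy) (comp_self _ HsV)).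
  have sub2 := sub; apply: td_sub hC sub2 _ => a b Ha Hb /contrV_elim[Hab [w [HwV Hwn Haw Hbw Hfw]]].
  have HaC : a \in comp e V s by case/setIP: (subsetP sub a Ha).
  have HwC := Hw a w HaC HwV Haw.
  apply: (contrV_intro Hab HwC Hwn Haw Hbw).
  by move: Hfw; rewrite /f (comp_trans HwC).
- move=> V s k Hc Hs _ IH HV.
  have HsS := source_from_in HV Hs.
  have HsV : s \in V by case/andP: Hs.
  have HsSV : s \in S :&: V by rewrite in_setI HsS HsV.
  have [f' [Hf' hf']] := IH (diff_closed HV).
  pose f v := if connect e s v then s else f' v.
  have HsV' : s \notin V :\: reach_in e V s.
    by rewrite (reach_inE _ HV) in_setD in_setI HsV reachE connect0.
  have Hvf : validV V f.
    move=> v Hv Hn; rewrite /f; case: ifP => Hsv; first by split.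
    by apply: Hf' _ Hn; rewrite (reach_inE _ HV) in_setD in_setI Hv reachE Hsv.
  exists f; split => //.
  apply: td_conn (contr_conn (g := contrV V f) HV Hc Hvf (fun _ _ _ _ H => H)) (HsSV) _.
  rewrite -(sources_diff HV HsSV).
  apply: td_sub hf' (subxx _) _ => a b Ha Hb /contrV_elim[Hab [w [HwV Hwn Haw Hbw Hfw]]].
  have Hsw : ~~ connect e s w.
    apply/negP => Hsw; move: Hfw; rewrite /f Hsw.
    by case/orP => /eqP Es; [move: Ha | move: Hb]; rewrite -Es in_setI (negbTE HsV') andbF.
  apply: (contrV_intro Hab _ Hwn Haw Hbw).
    by rewrite (reach_inE _ HV) in_setD in_setI HwV reachE (negbTE Hsw).
  by move: Hfw; rewrite /f (negbTE Hsw).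
Qed.

End Dag.

Theorem mainTheorem6 (T : finType) (e : rel T) (He : acyclic e) :
  exists (H1 H2 : rel T) (t1 d t2 : nat),
    [/\ in_GH e H1, in_GH e H2,
        is_td H1 (sources e) t1, is_td H2 (sources e) t2 & is_dtd e d]
    /\ t1 <= d <= t2.
Proof.
have [f2 Hf2] : exists f2 : T -> T, forall v, v \in nonsources e ->
    f2 v \in sources e /\ connect e (f2 v) v.
  apply: (functional_choice (fun v s => v \in nonsources e -> s \in sources e /\ connect e s v)).
  by move=> v; have [s Hs Hsv] := exists_source He v; exists s.
have Hv2 : validV e [set: T] f2 by move=> v _ Hn; exact: Hf2 v Hn.
pose H2 := contr_adj e f2.
have [t2 [ht2 mt2]] := min_ex (ex_intro (fun k => td_le H2 (sources e) k) _
                                (td_exists H2 (leqnn #|sources e|))).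
have hd2 : dtd_le e [set: T] t2.
  apply: (lemA He Hv2 (leqnn #|[set: T]|) (@closedT _ e)); by rewrite setIT.
have [d [hd md]] := min_ex (ex_intro _ t2 hd2).
have [f1 [Hv1 h1]] := lemB He hd (@closedT _ e); rewrite setIT in h1.
pose H1 := contrV e [set: T] f1.
have [t1 [ht1 mt1]] := min_ex (ex_intro (fun k => td_le H1 (sources e) k) _ h1).
exists H1, H2, t1, d, t2; split; last by rewrite (mt1 d h1) (md t2 hd2).
split.
- exists f1; split.
    by move=> v Hn; have [] := Hv1 v (in_setT v) Hn; rewrite reachE.
  move=> a b; rewrite /H1 /contrV /contr_adj /=; congr (_ && _).
  by apply: eq_existsb => v; rewrite in_setT.
- exists f2; split => //.
  by move=> v Hn; have [] := Hf2 v Hn; rewrite reachE.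
- by split.
- by split.
- by split.
Qed.
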